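(* $\mathsf{FOR}$ does not express Epstein relations: it is not the case that for all $\varphi,\psi\in\mathsf{FOR}$ there is $\chi\in\mathsf{FOR}$ such that for every Epstein relation $\mathfrak{R}$, $\langle\varphi,\psi\rangle\in\mathfrak{R}$ iff $\mathfrak{R}\vDash\chi$. In particular, there is no $\chi\in\mathsf{FOR}$ such that for every Epstein relation $\mathfrak{R}$, $\mathfrak{R}\vDash\chi$ iff $\langle\top,\bot\rangle\in\mathfrak{R}$.
   Context: Language: propositional letters $\Phi=\{p_0,p_1,\dots\}$; connectives $\neg$, $\lor,\wedge,\to,\leftrightarrow,\vartriangle,\looparrowright$; $\mathsf{FOR}$ the set of all formulas; $\top:=p_0\lor\neg p_0$, $\bot:=\neg(p_0\lor\neg p_0)$. An Epstein model is $\langle v,\mathfrak{R}\rangle$ with $v:\Phi\to\{0,1\}$ and $\mathfrak{R}\subseteq\mathsf{FOR}^2$ (an Epstein relation); truth: letters via $v$, boolean connectives classical, $\langle v,\mathfrak{R}\rangle\vDash\varphi\vartriangle\psi$ iff both true and $\langle\varphi,\psi\rangle\in\mathfrak{R}$; $\langle v,\mathfrak{R}\rangle\vDash\varphi\looparrowright\psi$ iff $\varphi\to\psi$ true and $\langle\varphi,\psi\rangle\in\mathfrak{R}$. $\mathfrak{R}\vDash\chi$ iff $\langle v,\mathfrak{R}\rangle\vDash\chi$ for every valuation $v$. *)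

(* Defs.v *)
From Stdlib Require Import Bool.

Inductive form : Type :=
| Var  : nat -> form
| Neg  : form -> form
| Or   : form -> form -> form
| And  : form -> form -> form
| Imp  : form -> form -> form
| Iff  : form -> form -> form
| Tri  : form -> form -> form
| Loop : form -> form -> form.

Definition top : form := Or (Var 0) (Neg (Var 0)).
Definition bot : form := Neg (Or (Var 0) (Neg (Var 0))).

Definition epstein_rel := form -> form -> Prop.

Fixpoint sat (v : nat -> bool) (R : epstein_rel) (f : form) : Prop :=
  match f with
  | Var n => v n = true
  | Neg a => ~ sat v R a
  | Or a b => sat v R a \/ sat v R b
  | And a b => sat v R a /\ sat v R b
  | Imp a b => sat v R a -> sat v R b
  | Iff a b => (sat v R a <-> sat v R b)
  | Tri a b => (sat v R a /\ sat v R b) /\ R a b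
  | Loop a b => (sat v R a -> sat v R b) /\ R a b
  end.

Definition rel_valid (R : epstein_rel) (chi : form) : Prop :=
  forall v : nat -> bool, sat v R chi.

(* Main.v *)
Require Import Defs.

Definition R1 : epstein_rel := fun _ _ => False.
Definition R2 : epstein_rel := fun a b => a = top /\ b = bot.

Lemma top_true v R : sat v R top.
Proof. simpl. destruct (v 0); [left; reflexivity | right; discriminate]. Qed.

Lemma bot_false v R : ~ sat v R bot.
Proof. intro H. apply H. exact (top_true v R). Qed.

Lemma same f : forall v, sat v R1 f <-> sat v R2 f.
Proof.
  induction f; intro v; simpl;
    try (specialize (IHf v)); try (specialize (IHf1 v)); try (specialize (IHf2 v));
    try tauto.
  - unfold R1, R2. split; [tauto|]. intros [[_ Hb] [_ ->]].
    exfalso; exact (bot_false _ _ Hb).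
  - unfold R1, R2. split; [tauto|]. intros [Hi [-> ->]].
    exfalso. apply (bot_false v R2). apply Hi. apply top_true.
Qed.

Lemma no_chi : ~ (exists chi : form,
        forall R : epstein_rel, (rel_valid R chi <-> R top bot)).
Proof.
  intros [chi H].
  assert (H2 : rel_valid R2 chi) by (apply H; split; reflexivity).
  assert (H1 : rel_valid R1 chi) by (intro v; apply same; apply H2).
  exact (proj1 (H R1) H1).
Qed.

Theorem mainTheorem15 :
  ~ (forall phi psi : form, exists chi : form,
        forall R : epstein_rel, (R phi psi <-> rel_valid R chi))
  /\
  ~ (exists chi : form,
        forall R : epstein_rel, (rel_valid R chi <-> R top bot)).
Proof.
  split; [|exact no_chi].
  intro H. destruct (H top bot) as [chi Hc]. apply no_chi.
  exists chi. intro R. specialize (Hc R). tauto.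
Qed.
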